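(* Let $N\ge1$, $K>0$, $r_i>0$, let $(\mu_{ij})$ be a nonnegative, symmetric, irreducible $N\times N$ matrix, and let $\alpha:\mathbb{R}^N\to\mathbb{R}$ be locally Lipschitz with $\alpha(0)=0$, monotone increasing for the componentwise order, and such that there exist positive $R,k,c$ with $c(\sum_jv_j)^k\le\alpha(v)$ for all $v\in[0,\infty)^N$ with $\sum_j|v_j|\ge R$. Let $\bar v$ be the unique positive stationary solution of $$\frac{dv_i}{dt}=v_i\left[r_i-\frac{1}{K}\alpha(v)\right]+\sum_{j=1}^N\mu_{ij}(v_j-v_i),\qquad i=1,\dots,N,$$ and let $v(t)$ be a positive solution of this system defined for all $t\ge0$. Set $\mathcal{E}(v)=\sum_{i=1}^Nv_i^2$ and $\beta(v)=\sum_{i=1}^Nv_i\bar v_i$. Then there exists a constant $C_1$ such that $\mathcal{E}(v(t))+\beta(v(t))\le C_1$ for all $t\ge0$.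
   Context: A stationary solution is a vector at which the right-hand side vanishes for every $i$; positive means all components strictly positive. *)

(* Defs.v *)
From HB Require Import structures.
From mathcomp Require Import all_boot all_order all_algebra.
From mathcomp Require Import all_classical all_reals all_analysis.
Set Implicit Arguments. Unset Strict Implicit. Unset Printing Implicit Defensive.
Import Order.TTheory GRing.Theory Num.Theory.
Import numFieldNormedType.Exports.
Local Open Scope classical_set_scope.
Local Open Scope ring_scope.

Definition mx_nonneg (R : realType) (N : nat) (mu : 'I_N -> 'I_N -> R) :=
  forall i j, 0 <= mu i j.

Definition mx_symmetric (R : realType) (N : nat) (mu : 'I_N -> 'I_N -> R) :=
  forall i j, mu i j = mu j i.

(* Irreducible (nonnegative) matrix: its directed graph (edge i -> j iff
   mu i j > 0) is strongly connected. *)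
Definition mx_irreducible (R : realType) (N : nat) (mu : 'I_N -> 'I_N -> R) :=
  forall i j, connect (fun a b => 0 < mu a b) i j.

Definition loc_lipschitz (R : realType) (N : nat) (alpha : ('I_N -> R) -> R) :=
  forall x : 'I_N -> R, exists2 rho : R, 0 < rho & exists L : R,
    forall y z : 'I_N -> R,
      \sum_i `|y i - x i| < rho -> \sum_i `|z i - x i| < rho ->
      `|alpha y - alpha z| <= L * \sum_i `|y i - z i|.

Definition comp_monotone (R : realType) (N : nat) (alpha : ('I_N -> R) -> R) :=
  forall x y : 'I_N -> R, (forall i, x i <= y i) -> alpha x <= alpha y.

Definition rhs (R : realType) (N : nat) (K : R) (r : 'I_N -> R)
  (mu : 'I_N -> 'I_N -> R) (alpha : ('I_N -> R) -> R) (v : 'I_N -> R) (i : 'I_N) : R :=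
  v i * (r i - K^-1 * alpha v) + \sum_j mu i j * (v j - v i).

Definition pos_stationary (R : realType) (N : nat) (K : R) (r : 'I_N -> R)
  (mu : 'I_N -> 'I_N -> R) (alpha : ('I_N -> R) -> R) (w : 'I_N -> R) :=
  (forall i, 0 < w i) /\ (forall i, rhs K r mu alpha w i = 0).

Definition pos_solution (R : realType) (N : nat) (K : R) (r : 'I_N -> R)
  (mu : 'I_N -> 'I_N -> R) (alpha : ('I_N -> R) -> R) (v : R -> 'I_N -> R) :=
  (forall t : R, 0 <= t -> forall i, 0 < v t i) /\
  (forall t : R, 0 < t -> forall i : 'I_N,
      is_derive t 1 (fun s => v s i) (rhs K r mu alpha (v t) i)) /\
  (forall i : 'I_N, (fun s : R => v s i) @ (0:R)^'+ --> v 0 i).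

(* Main.v *)
Require Import Defs.
From HB Require Import structures.
From mathcomp Require Import all_boot all_order all_algebra.
From mathcomp Require Import all_classical all_reals all_analysis.
Import Order.TTheory GRing.Theory Num.Theory.
Import numFieldNormedType.Exports.
Local Open Scope classical_set_scope.
Local Open Scope ring_scope.

Lemma term_le_sum (R : numDomainType) N (F : 'I_N -> R) i :
  (forall j, 0 <= F j) -> F i <= \sum_j F j.
Proof.
move=> F0; rewrite (bigD1 i) //= lerDl; exact: sumr_ge0.
Qed.

Lemma rhs_sum (R : realType) N K (r : 'I_N -> R) mu alpha (w : 'I_N -> R) :
  mx_symmetric mu ->
  \sum_i rhs K r mu alpha w i = \sum_i w i * r i - K^-1 * alpha w * \sum_i w i.
Proof.
move=> musym.
have H0 : \sum_i \sum_j mu i j * (w j - w i) = 0.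
  rewrite (eq_bigr (fun i => \sum_j mu i j * w j - \sum_j mu i j * w i)); last first.
    by move=> i _; rewrite -sumrB; apply: eq_bigr => j _; rewrite mulrBr.
  rewrite sumrB exchange_big /=.
  have E : \sum_(j < N) \sum_(i < N) mu i j * w j = \sum_(i < N) \sum_(j < N) mu i j * w i.
    by apply: eq_bigr => i _; apply: eq_bigr => j _; rewrite musym.
  by rewrite E subrr.
rewrite /rhs big_split /= H0 addr0 mulr_sumr -sumrB; apply: eq_bigr => i _.
by rewrite mulrBr [w i * (_ * _)]mulrC.
Qed.

Lemma rhs_neg (R : realType) N K (r : 'I_N -> R) mu alpha (w : 'I_N -> R) R0 k c :
  0 < K -> (forall i, 0 < r i) -> mx_symmetric mu -> 0 < R0 -> 0 < k -> 0 < c ->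
  (forall w : 'I_N -> R, (forall j, 0 <= w j) ->
         R0 <= \sum_j `|w j| -> c * (\sum_j w j) `^ k <= alpha w) ->
  (forall i, 0 < w i) ->
  Num.max R0 ((K * (\sum_i r i) / c) `^ k^-1) < \sum_i w i ->
  \sum_i rhs K r mu alpha w i < 0.
Proof.
move=> K0 r0 musym R00 k0 c0 Hal w0; rewrite gt_max => /andP[RS BS].
set rs := \sum_i r i; set S := \sum_i w i.
have Spos : 0 < S by apply: lt_trans RS.
have rs0 : 0 <= rs by apply: sumr_ge0 => i _; apply: ltW.
have Sk : K * rs / c < S `^ k.
  have -> : K * rs / c = ((K * rs / c) `^ k^-1) `^ k.
    rewrite -powRrM mulVf ?gt_eqF // powRr1 //.
    by apply: divr_ge0; [apply: mulr_ge0 => //; apply: ltW | apply: ltW].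
  apply: gt0_ltr_powR => //; rewrite ?inE ?nnegrE ?powR_ge0 //.
  exact: ltW.
have al : c * S `^ k <= alpha w.
  apply: Hal; first by move=> j; apply: ltW.
  rewrite (eq_bigr (fun j => w j)); last by move=> j _; rewrite gtr0_norm.
  exact: ltW.
have alK : rs < K^-1 * alpha w.
  have := Sk; rewrite ltr_pdivrMr // => Sk'.
  rewrite mulrC ltr_pdivlMr //; apply: lt_le_trans al.
  by rewrite mulrC [c * _]mulrC.
have /eqP := @rhs_sum R N K r mu alpha w musym; rewrite eq_le => /andP[E _].
apply: (le_lt_trans E); rewrite subr_lt0 (le_lt_trans (y := rs * S)) //.
  rewrite /S mulr_sumr; apply: ler_sum => i _; rewrite mulrC ler_pM2r //.
  exact: term_le_sum (fun j => ltW (r0 j)).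
by rewrite ltr_pM2r.
Qed.

Lemma bound_S (R : realType) (S dS : R -> R) (M m : R) :
  (forall t : R, 0 < t -> is_derive t 1 S (dS t)) -> S @ (0:R)^'+ --> S 0 ->
  (forall t : R, 0 < t -> M < S t -> dS t < 0) -> S 0 <= m -> M <= m ->
  forall t : R, 0 <= t -> S t <= m.
Proof.
move=> Sd S0 dneg S0m Mm t1 t10; rewrite leNgt; apply/negP => mt1.
have t1gt0 : 0 < t1.
  rewrite lt_neqAle t10 andbT; apply/eqP => t1E; move: mt1; rewrite -t1E.
  by rewrite ltNge S0m.
have contS : forall x : R, 0 < x -> S @ x --> S x.
  move=> x x0; apply/differentiable_continuous; rewrite -derivable1_diffP.
  by have := Sd x x0 => -[].
have cS : {within `[0, t1], continuous S}.
  apply/continuous_within_itvP => //; split => //.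
    by move=> x; rewrite in_itv /= => /andP[x0 _]; apply: contS.
  exact: cvg_at_left_filter (contS _ t1gt0).
have [s sI smax] := EVT_max (ltW t1gt0) cS.
move: (sI); rewrite in_itv /= => /andP[s0 st1].
have St1s : S t1 <= S s by apply: smax; rewrite in_itv /= t10 lexx.
have Ms : M < S s by apply: le_lt_trans Mm (lt_le_trans mt1 St1s).
have sgt0 : 0 < s.
  rewrite lt_neqAle s0 andbT; apply/eqP => sE; move: St1s; rewrite -sE.
  by move=> H; move: (lt_le_trans mt1 (le_trans H S0m)); rewrite ltxx.
have [e /= e0 eP] : nbhs_ball s (fun x => M < S x).
  by apply/nbhs_ballP; exact: (cvgr_gt _ (contS _ sgt0) _ Ms).
set d := Num.min (e / 2) (s / 2).
have d0 : 0 < d by rewrite lt_min !divr_gt0.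
have dle : d <= s / 2 by rewrite ge_min lexx orbT.
have dlt : d < e by rewrite gt_min ltr_pdivrMr // ltr_pMr // ltr1n orTb.
have sd : s - d < s by rewrite ltrBlDr ltrDl.
have sdpos : 0 < s - d by rewrite subr_gt0 (le_lt_trans dle) // ltr_pdivrMr // ltr_pMr // ltr1n.
have cI : {within `[s - d, s], continuous S}.
  apply: derivable_within_continuous => x; rewrite in_itv /= => /andP[x1 _].
  by have [] := Sd x (lt_le_trans sdpos x1).
have [x xI Hx] := MVT sd (fun x xI => Sd x (lt_trans sdpos (andP xI).1 : 0 < x)) cI.
move: (xI); rewrite in_itv /= => /andP[x1 x2].
have xpos : 0 < x by apply: lt_trans sdpos x1.
have Mx : M < S x.
  apply: eP; rewrite /ball /= ger0_norm ?subr_ge0 ?ltW //.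
  apply: lt_trans dlt; rewrite ltrBlDr; by rewrite ltrBlDl in x1.
have := dneg x xpos Mx => dxn.
have : S (s - d) <= S s by apply: smax; rewrite in_itv /= (ltW sdpos) (le_trans (ltW sd)).
rewrite leNgt => /negP; apply; rewrite -subr_gt0 -opprB Hx oppr_gt0 pmulr_llt0 //.
by rewrite subr_gt0.
Qed.

Theorem lemma4p6 (R : realType) (N : nat) (K : R) (r : 'I_N -> R)
  (mu : 'I_N -> 'I_N -> R) (alpha : ('I_N -> R) -> R)
  (vbar : 'I_N -> R) (v : R -> 'I_N -> R) :
  (1 <= N)%N -> 0 < K -> (forall i, 0 < r i) ->
  mx_nonneg mu -> mx_symmetric mu -> mx_irreducible mu ->
  loc_lipschitz alpha -> alpha (fun _ => 0) = 0 -> comp_monotone alpha ->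
  (exists R0 : R, exists k : R, exists c : R,
     [/\ 0 < R0, 0 < k, 0 < c &
       forall w : 'I_N -> R, (forall j, 0 <= w j) ->
         R0 <= \sum_j `|w j| -> c * (\sum_j w j) `^ k <= alpha w]) ->
  pos_stationary K r mu alpha vbar ->
  (forall w, pos_stationary K r mu alpha w -> w = vbar) ->
  pos_solution K r mu alpha v ->
  exists C1 : R, forall t, 0 <= t ->
    \sum_i (v t i) ^+ 2 + \sum_i v t i * vbar i <= C1.
Proof.
move=> N1 K0 r0 mu0 musym _ _ _ _ [R0 [k [c [R00 k0 c0 Hal]]]] [vb0 _] _
  [vpos [vder vcont]].
pose S := fun t : R => \sum_i v t i.
pose M := Num.max R0 ((K * (\sum_i r i) / c) `^ k^-1).
pose m := Num.max (S 0) M.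
have Sb : forall t : R, 0 <= t -> S t <= m.
  apply: (@bound_S R S (fun t => \sum_i rhs K r mu alpha (v t) i) M m).
  - move=> t t0; have := is_derive_sum (fun i => vder t t0 i).
    by rewrite fct_sumE.
  - rewrite /S; apply: cvg_big => //; first exact: add_continuous.
  - move=> t t0 Mt.
    exact: (@rhs_neg R N K r mu alpha (v t) R0 k c K0 r0 musym R00 k0 c0 Hal (fun i => vpos t (ltW t0) i) Mt).
  - by rewrite le_max lexx.
  - by rewrite le_max lexx orbT.
exists (m ^+ 2 + m * \sum_i vbar i) => t t0.
have vp := vpos t t0; have St := Sb t t0.
have S0 : 0 <= S t by apply: sumr_ge0 => i _; apply: ltW.
have vS : forall i, v t i <= S t by move=> i; apply: term_le_sum => j; apply: ltW.
apply: lerD.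
  apply: (le_trans (y := \sum_i v t i * S t)).
    by apply: ler_sum => i _; rewrite expr2 ler_pM2l.
  rewrite -mulr_suml expr2; exact: ler_pM.
apply: (le_trans (y := \sum_i S t * vbar i)).
  by apply: ler_sum => i _; rewrite ler_pM2r.
rewrite -mulr_sumr; apply: ler_wpM2r => //.
by apply: sumr_ge0 => i _; apply: ltW.
Qed.
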